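(* Let $(\mathrm{G},\mu)$ be a Lorentzian flat Lie group. Then $\mathrm{G}$ admits a timelike left-invariant Killing vector field (for $\mu$) if and only if $\mathrm{G}$ admits a left-invariant Riemannian metric whose Levi-Civita connection coincides with the Levi-Civita connection of $\mu$.
   Context: A Lorentzian flat Lie group is a connected Lie group $\mathrm{G}$ endowed with a left-invariant flat pseudo-Riemannian metric $\mu$ of signature $(-,+,\dots,+)$. A vector field $X$ is timelike if $\mu(X,X)<0$ everywhere, and Killing if the flow of $X$ preserves $\mu$. *)

(* Defs.v *)
(* Lie-algebra level model of left-invariant geometry on a
   Lie group G of dimension n: left-invariant vector fields = Lie algebra
   g = 'rV[R]_n, left-invariant metrics = inner products on g. *)
From HB Require Import structures.
From mathcomp Require Import all_boot all_order all_algebra.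
From mathcomp Require Import all_classical all_reals.
Set Implicit Arguments. Unset Strict Implicit. Unset Printing Implicit Defensive.
Import Order.TTheory GRing.Theory Num.Theory.
Local Open Scope ring_scope.

Section Defs.
Variables (R : realType) (n : nat).
Notation vec := 'rV[R]_n.

Definition bform (M : 'M[R]_n) (u v : vec) : R := (u *m M *m v^T) 0 0.

Definition bilinear_map (f : vec -> vec -> vec) : Prop :=
  (forall (a : R) u v w, f (a *: u + v) w = a *: f u w + f v w) /\
  (forall (a : R) u v w, f u (a *: v + w) = a *: f u v + f u w).

Definition lie_bracket (br : vec -> vec -> vec) : Prop :=
  [/\ bilinear_map br,
      (forall u, br u u = 0) &
      (forall u v w, br u (br v w) + br v (br w u) + br w (br u v) = 0)].

Definition lorentzian (M : 'M[R]_n) : Prop :=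
  [/\ (0 < n)%N, M^T = M &
      exists P : 'M[R]_n, P \in unitmx /\
        P *m M *m P^T = diag_mx (\row_(i < n) (if val i == 0%N then -1 else 1))].

Definition riemannian (S : 'M[R]_n) : Prop :=
  S^T = S /\ forall u : vec, u != 0 -> 0 < bform S u u.

(* prod is the Levi-Civita product of the metric M on the Lie algebra
   (br): nabla_{u+} v+ = (prod u v)+ for left-invariant fields,
   characterized by the Koszul formula *)
Definition levi_civita (M : 'M[R]_n) (br : vec -> vec -> vec)
  (prod : vec -> vec -> vec) : Prop :=
  forall u v w, 2 * bform M (prod u v) w =
    bform M (br u v) w - bform M (br v w) u + bform M (br w u) v.

Definition flat_product (br prod : vec -> vec -> vec) : Prop :=
  forall u v w, prod u (prod v w) - prod v (prod u w) = prod (br u v) w.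

(* a left-invariant vector field X is Killing iff its flow (right
   translations by exp tX) is isometric, i.e. ad_X is M-skew *)
Definition killing (M : 'M[R]_n) (br : vec -> vec -> vec) (X : vec) : Prop :=
  forall u v, bform M (br X u) v + bform M u (br X v) = 0.

Definition timelike (M : 'M[R]_n) (X : vec) : Prop := bform M X X < 0.

End Defs.

(* Main.v *)
Require Import Defs.
From HB Require Import structures.
From mathcomp Require Import all_boot all_order all_algebra.
From mathcomp Require Import all_classical all_reals.
From mathcomp Require Import polyrcf.
From mathcomp Require Import ring lra.
Import Order.TTheory GRing.Theory Num.Theory.
Local Open Scope ring_scope.
Set Implicit Arguments. Unset Strict Implicit.

Section Bform.
Variables (R : realType) (n : nat).
Local Notation vec := 'rV[R]_n.
Implicit Types (N : 'M[R]_n) (u v w : vec).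

Lemma bformDl N u1 u2 v : bform N (u1 + u2) v = bform N u1 v + bform N u2 v.
Proof. by rewrite /bform !mulmxDl mxE. Qed.
Lemma bformZl N a u v : bform N (a *: u) v = a * bform N u v.
Proof. by rewrite /bform -!scalemxAl mxE. Qed.
Lemma bformNl N u v : bform N (- u) v = - bform N u v.
Proof. by rewrite -scaleN1r bformZl mulN1r. Qed.
Lemma bformBl N u1 u2 v : bform N (u1 - u2) v = bform N u1 v - bform N u2 v.
Proof. by rewrite bformDl bformNl. Qed.
Lemma bform0l N v : bform N 0 v = 0.
Proof. by rewrite /bform !mul0mx mxE. Qed.
Lemma bformDr N u v1 v2 : bform N u (v1 + v2) = bform N u v1 + bform N u v2.
Proof. by rewrite /bform linearD /= mulmxDr mxE. Qed.
Lemma bformZr N a u v : bform N u (a *: v) = a * bform N u v.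
Proof. by rewrite /bform linearZ /= -scalemxAr mxE. Qed.
Lemma bformNr N u v : bform N u (- v) = - bform N u v.
Proof. by rewrite -scaleN1r bformZr mulN1r. Qed.
Lemma bformBr N u v1 v2 : bform N u (v1 - v2) = bform N u v1 - bform N u v2.
Proof. by rewrite bformDr bformNr. Qed.
Lemma bformDm N1 N2 u v : bform (N1 + N2) u v = bform N1 u v + bform N2 u v.
Proof. by rewrite /bform mulmxDr mulmxDl mxE. Qed.
Lemma bformZm a N u v : bform (a *: N) u v = a * bform N u v.
Proof. by rewrite /bform -scalemxAr -scalemxAl mxE. Qed.
Lemma bform_sym N u v : N^T = N -> bform N u v = bform N v u.
Proof.
move=> sN; rewrite /bform -[in LHS](trmxK (u *m N *m v^T)) mxE.
by rewrite !trmx_mul trmxK sN mulmxA.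
Qed.

Lemma bform_nondeg N u : N \in unitmx -> (forall v, bform N u v = 0) -> u = 0.
Proof.
move=> NU h; suff : u *m N = 0.
  by move=> /(congr1 (mulmx^~ (invmx N))); rewrite mulmxK // mul0mx.
apply/rowP => j; move: (h (delta_mx 0 j)).
by rewrite /bform trmx_delta -colE mxE => ->; rewrite mxE.
Qed.
End Bform.

Section Lor.
Variables (R : realType) (n : nat) (M : 'M[R]_n).
Hypothesis HM : lorentzian M.
Local Notation vec := 'rV[R]_n.

Lemma lor_sym : M^T = M. Proof. by case: HM. Qed.
Lemma lor_n0 : (0 < n)%N. Proof. by case: HM. Qed.

Let dd := \row_(i < n) (if val i == 0%N then -1 else 1 : R).

Lemma lor_P : exists2 P : 'M[R]_n, P \in unitmx &
  forall u v, bform M u v = \sum_j (u *m invmx P) 0 j * dd 0 j * (v *m invmx P) 0 j.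
Proof.
case: HM => _ _ [P [PU hP]]; exists P => // u v.
have eM : M = invmx P *m diag_mx dd *m (invmx P)^T.
  rewrite -hP !mulmxA mulVmx // mul1mx -!mulmxA -trmx_mul mulVmx //.
  by rewrite trmx1 mulmx1.
rewrite /bform.
have -> : u *m M *m v^T = (u *m invmx P) *m diag_mx dd *m (v *m invmx P)^T.
  by rewrite eM trmx_mul !mulmxA.
rewrite mxE; apply: eq_bigr => j _.
by rewrite mul_mx_diag !mxE.
Qed.

Lemma lor_unit : M \in unitmx.
Proof.
case: HM => _ _ [P [PU hP]].
have : P *m M *m P^T \in unitmx.
  rewrite hP unitmxE det_diag; apply/unitrP; exists (\prod_i (\row_(i < n) (if val i == 0%N then -1 else 1 : R)) 0 i).
  rewrite -big_split /=; split; apply: big1 => i _; rewrite mxE; case: ifP => _; by rewrite ?mulrNN mulr1.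
by rewrite !unitmx_mul => /andP[/andP[]].
Qed.

Lemma lor_det : \det M < 0.
Proof.
case: HM => n0 _ [P [PU hP]].
have := congr1 determinant hP; rewrite !det_mulmx det_tr det_diag.
rewrite (bigD1 (Ordinal n0)) //= big1 => [|i /eqP ne]; last first.
  rewrite mxE ifF //; apply/negP => /eqP e; apply: ne; exact: val_inj.
rewrite mxE /= mulr1 => e.
have : \det P * \det P * \det M = -1 by rewrite -e; ring.
move=> e2; nra.
Qed.

Lemma lor_F1 (P : 'M[R]_n) (z : vec) i0 : P \in unitmx -> val i0 = 0%N ->
  (forall u v, bform M u v = \sum_j (u *m invmx P) 0 j * dd 0 j * (v *m invmx P) 0 j) ->
  (z *m invmx P) 0 i0 = 0 -> 0 <= bform M z z /\ (bform M z z = 0 -> z = 0).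
Proof.
move=> PU vi0 hb hz.
have e : bform M z z = \sum_j (z *m invmx P) 0 j ^+ 2.
  rewrite hb; apply: eq_bigr => j _; rewrite /dd [X in _ * X * _]mxE.
  case: ifP => [/eqP vj|_]; last by rewrite mulr1 expr2.
  have -> : j = i0 by apply: val_inj; rewrite vj vi0.
  by rewrite hz !mul0r expr2 mul0r.
rewrite e; split; first by apply: sumr_ge0 => j _; exact: sqr_ge0.
move=> s0; suff : z *m invmx P = 0.
  by move=> /(congr1 (mulmx^~ P)); rewrite mulmxKV // mul0mx.
apply/rowP => j; rewrite [RHS]mxE.
have := psumr_eq0P (fun j _ => sqr_ge0 ((z *m invmx P) 0 j)) s0 (i := j) isT.
by move/eqP; rewrite sqrf_eq0 => /eqP.
Qed.

Lemma lor_key (x w : vec) : bform M x x < 0 -> bform M x w = 0 ->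
  bform M w w <= 0 -> w = 0.
Proof.
move=> hx hxw hw.
have [P PU hb] := lor_P.
pose i0 := Ordinal lor_n0.
pose phi (u : vec) := (u *m invmx P) 0 i0.
have phiL a b (u v : vec) : phi (a *: u - b *: v) = a * phi u - b * phi v.
  by rewrite /phi mulmxBl -!scalemxAl !mxE.
have hwx : bform M w x = 0 by rewrite bform_sym ?lor_sym.
set z := phi w *: x - phi x *: w.
have hz0 : phi z = 0 by rewrite phiL mulrC subrr.
have [hz _] := @lor_F1 P z i0 PU (erefl _) hb hz0.
move: hz; rewrite /z !(bformBl, bformBr, bformZl, bformZr) hxw hwx => hz.
have a0 : phi w = 0.
  set a := phi w in hz *; set b := phi x in hz; set q := bform M x x in hx hz.
  have h1 : a ^+ 2 * q >= 0 by nra.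
  have h2 : a ^+ 2 * q <= 0 by rewrite mulr_ge0_le0 ?sqr_ge0 // ltW.
  have : a ^+ 2 * q == 0 by rewrite eq_le h1 h2.
  rewrite mulf_eq0 sqrf_eq0 (negbTE (ltr0_neq0 hx)) orbF.
  by move/eqP.
have [h1 h2] := @lor_F1 P w i0 PU (erefl _) hb a0.
by apply: h2; apply/eqP; rewrite eq_le hw h1.
Qed.
End Lor.

Section LC.
Variables (R : realType) (n : nat).
Local Notation vec := 'rV[R]_n.
Variables (br prod : vec -> vec -> vec).
Hypothesis Hbr : lie_bracket br.

Lemma br_anti u v : br v u = - br u v.
Proof.
case: Hbr => [[hl hr] halt _].
have addl x y z : br (x + y) z = br x z + br y z.
  by have := hl 1 x y z; rewrite !scale1r.
have addr x y z : br x (y + z) = br x y + br x z.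
  by have := hr 1 x y z; rewrite !scale1r.
have := halt (u + v); rewrite addl !addr !halt add0r addr0 => /eqP.
by rewrite addr_eq0 => /eqP ->; rewrite opprK.
Qed.

Lemma lc_skew N : N^T = N -> levi_civita N br prod ->
  forall u v w, bform N (prod u v) w + bform N v (prod u w) = 0.
Proof.
move=> sN lc u v w.
have h1 := lc u v w; have h2 := lc u w v.
rewrite (br_anti w u) (br_anti v w) (br_anti u v) !bformNl in h2.
rewrite (bform_sym v (prod u w)) //; lra.
Qed.

Lemma lc_torsion N : N^T = N -> N \in unitmx -> levi_civita N br prod ->
  forall u v, prod u v - prod v u = br u v.
Proof.
move=> sN NU lc u v; apply/eqP; rewrite -subr_eq0; apply/eqP.
apply: (bform_nondeg NU) => w.
have h1 := lc u v w; have h2 := lc v u w.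
rewrite (br_anti u v) (br_anti w u) (br_anti v w) !bformNl in h2.
rewrite !bformBl; lra.
Qed.

Lemma lc_of_skew N : N^T = N ->
  (forall u v, prod u v - prod v u = br u v) ->
  (forall u v w, bform N (prod u v) w + bform N v (prod u w) = 0) ->
  levi_civita N br prod.
Proof.
move=> sN tor sk u v w.
rewrite -!tor !bformBl.
have := sk u v w; have := sk v u w; have := sk w u v; have := sk v w u;
have := sk w v u; have := sk u w v.
rewrite !(bform_sym _ u) // !(bform_sym _ v) // !(bform_sym _ w) //.
lra.
Qed.
End LC.

Lemma horner_charE (R : comNzRingType) n (A : 'M[R]_n) x :
  (char_poly A).[x] = \det (x%:M - A).
Proof.
rewrite /char_poly /determinant horner_sum; apply: eq_bigr => s _.
rewrite hornerM horner_exp !hornerE; congr (_ * _).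
rewrite (big_morph _ (fun p q => hornerM p q x) (hornerC 1 x)).
by apply: eq_bigr => i _; rewrite !mxE !(hornerE, hornerMn).
Qed.

Section Eig.
Variables (R : realType) (n : nat).

Lemma monic_pos (p : {poly R}) : p \is monic -> exists b, 0 <= b /\ 0 < p.[b].
Proof.
move=> /monicP lc1; have lpos : 0 < lead_coef p by rewrite lc1.
have [N0 hN] := poly_pinfty_gt_lc lpos.
exists (Num.max N0 0); split; first by rewrite le_max lexx orbT.
by apply: lt_le_trans (hN _ _); rewrite ?lc1 ?ltr01 // le_max lexx.
Qed.

Lemma bform_ge0_id (v : 'rV[R]_n) : 0 <= (v *m v^T) 0 0.
Proof. by rewrite mxE; apply: sumr_ge0 => i _; rewrite mxE -expr2 sqr_ge0. Qed.

Variable S : 'M[R]_n.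
Hypothesis HS : riemannian S.

Lemma riem_shift_unit c : 0 <= c -> \det (c%:M + S) != 0.
Proof.
case: HS => sS pS cge; apply/negP => /det0P [v vn0].
rewrite mulmxDr mul_mx_scalar => /eqP; rewrite addrC addr_eq0 => /eqP e.
have := pS v vn0; rewrite /bform e mulNmx -scalemxAl.
have := bform_ge0_id v; set t := v *m v^T; rewrite !mxE; nra.
Qed.

Lemma riem_det : 0 < \det S.
Proof.
have [b [b0 hb]] := monic_pos (char_poly_monic (- S)).
have e x : (char_poly (- S)).[x] = \det (x%:M + S) by rewrite horner_charE opprK.
have := riem_shift_unit (lexx 0); rewrite -scalemx1 scale0r add0r => d0.
rewrite lt_neqAle eq_sym d0 /=; rewrite leNgt; apply/negP => dn.
have [|x /andP[x0 _]] := @poly_ivt _ (char_poly (- S)) 0 b b0.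
  rewrite e -scalemx1 scale0r add0r (ltW dn) /=; exact: ltW.
by rewrite /root e (negbTE (riem_shift_unit x0)).
Qed.

Lemma riem_unit : S \in unitmx.
Proof. by rewrite unitmxE unitfE; have := riem_det; rewrite lt0r => /andP[]. Qed.

Variable M : 'M[R]_n.
Hypothesis HM : lorentzian M.

Lemma gen_eig : exists c (e : 'rV[R]_n), [/\ 0 < c, e != 0 & e *m M = - c *: (e *m S)].
Proof.
pose B := - (M *m invmx S).
have e0 : (char_poly B).[0] < 0.
  rewrite horner_charE -scalemx1 scale0r add0r opprK det_mulmx det_inv.
  by rewrite pmulr_llt0 ?invr_gt0 ?riem_det // lor_det.
have [b [b0 hb]] := monic_pos (char_poly_monic B).
have [|c /andP[c0 _] rc] := @poly_ivt _ (char_poly B) 0 b b0.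
  by rewrite (ltW e0) ltW.
have cpos : 0 < c.
  rewrite lt_neqAle c0 andbT; apply/eqP => ec; move: rc; rewrite -ec /root.
  by rewrite (negbTE (ltr0_neq0 e0)).
move: rc; rewrite -eigenvalue_root_char => /eigenvalueP [e he en0].
exists c, e; split => //.
have := congr1 (mulmx^~ (- S)) he.
rewrite /B !(mulmxN, mulNmx) !opprK mulmxA mulmxKV ?riem_unit // => ->.
by rewrite -scalemxAl scaleNr.
Qed.
End Eig.

Lemma bform0r (R : realType) n (N : 'M[R]_n) (u : 'rV[R]_n) : bform N u 0 = 0.
Proof. by rewrite /bform trmx0 mulmx0 mxE. Qed.

Section Main.
Variables (R : realType) (n : nat).
Local Notation vec := 'rV[R]_n.
Variables (br prod : vec -> vec -> vec) (M : 'M[R]_n).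
Hypotheses (Hbr : lie_bracket br) (HM : lorentzian M)
  (lcM : levi_civita M br prod) (fl : flat_product br prod).
Local Notation p := prod.

Let sM := lor_sym HM.
Let UM := lor_unit HM.
Let skM := lc_skew Hbr sM lcM.
Let tor := lc_torsion Hbr sM UM lcM.

Lemma br_subl a b c : br (a - b) c = br a c - br b c.
Proof. case: Hbr => [[hl _] _ _]; have := hl (-1) b a c; rewrite !scaleN1r. by rewrite addrC => ->; rewrite addrC. Qed.
Lemma br_subr a b c : br c (a - b) = br c a - br c b.
Proof. case: Hbr => [[_ hr] _ _]; have := hr (-1) c b a; rewrite !scaleN1r. by rewrite addrC => ->; rewrite addrC. Qed.

Lemma p_subl a b c : p (a - b) c = p a c - p b c.
Proof.
apply/eqP; rewrite -subr_eq0; apply/eqP; apply: (bform_nondeg UM) => w.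
have h := lcM (a - b) c w; have h1 := lcM a c w; have h2 := lcM b c w.
rewrite br_subl br_subr !bformBl bformBr in h.
rewrite !bformBl; lra.
Qed.

Section Fwd.
Variable X : vec.
Hypotheses (tX : timelike M X) (kX : killing M br X).

Lemma askew u v : bform M (p u X) v + bform M u (p v X) = 0.
Proof.
have := kX u v; rewrite -!tor !bformBl !bformBr; have := skM X u v; lra.
Qed.

Lemma Csym v w : p v (p w X) - p (p v w) X = p w (p v X) - p (p w v) X.
Proof.
have := fl v w X; rewrite -tor p_subl => e.
have -> : p v (p w X) = p (p v w) X - p (p w v) X + p w (p v X) by rewrite -e subrK.
by rewrite addrAC (addrAC (p (p v w) X)) subrr add0r addrC.
Qed.


Definition Cf v w := p v (p w X) - p (p v w) X.

Lemma CfC v w : Cf v w = Cf w v. Proof. exact: Csym. Qed.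

Lemma skewC v w z : bform M (Cf v w) z = - bform M (Cf v z) w.
Proof.
rewrite /Cf !bformBl.
have f1 := skM v (p w X) z; have f2 := askew w (p v z).
have f3 := askew (p v w) z; have f4 := skM v w (p z X).
rewrite (bform_sym (p v (p z X))) // (bform_sym (p (p v z) X)) //; lra.
Qed.

Lemma Cf0 v w : Cf v w = 0.
Proof.
apply: (bform_nondeg UM) => z.
have g1 := skewC v w z; have g2 := skewC z v w; have g3 := skewC w z v.
rewrite (CfC v z) in g1; rewrite (CfC z w) in g2; rewrite (CfC w v) in g3.
lra.
Qed.

Lemma pXX : p X X = 0.
Proof.
apply: (bform_nondeg UM) => v; rewrite bform_sym //.
have := askew v X; have := skM v X X; rewrite (bform_sym X (p v X)) //; lra.
Qed.

Lemma parX v : p v X = 0.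
Proof.
apply: (lor_key HM (x := X)) => //.
- have := skM v X X; rewrite (bform_sym X (p v X)) //; lra.
- have := skM v X (p v X).
  have := Cf0 v v; rewrite /Cf => /eqP; rewrite subr_eq0 => /eqP ->.
  have := askew (p v v) X; rewrite pXX bform_sym // (bform_sym X) //.
  rewrite bform0r => h; lra.
Qed.

Let m := bform M X X.
Let S := M - (2 / m) *: (M *m X^T *m X *m M).

Lemma bformS a b : bform S a b = bform M a b - 2 / m * (bform M a X * bform M X b).
Proof.
rewrite /S -scaleNr bformDm bformZm mulNr; congr (_ - _ * _).
rewrite /bform.
have -> : a *m (M *m X^T *m X *m M) *m b^T = (a *m M *m X^T) *m (X *m M *m b^T).
  by rewrite !mulmxA.
by rewrite [in LHS]mxE big_ord1.
Qed.

Lemma S_sym : S^T = S.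
Proof.
by rewrite /S linearB linearZ /= !trmx_mul trmxK sM !mulmxA.
Qed.

Lemma S_pos u : u != 0 -> 0 < bform S u u.
Proof.
move=> un0; have m0 : m < 0 := tX.
have mn0 : m != 0 by rewrite ltr0_neq0.
pose a := bform M u X / m; pose w := u - a *: X.
have hwX : bform M w X = 0 by rewrite bformBl bformZl /a -/m divfK // subrr.
have hXw : bform M X w = 0 by rewrite bform_sym.
have eu : u = w + a *: X by rewrite /w subrK.
clearbody w a.
rewrite eu bformS !(bformDl, bformDr, bformZl, bformZr) hwX hXw -/m.
have e2 : 2 / m * ((0 + a * m) * (0 + a * m)) = 2 * (a * a * m).
  by rewrite !add0r; field.
rewrite e2.
have [w0|wn0] := eqVneq w 0.
  rewrite w0 bform0l.
  have an0 : a != 0 by apply: contraNneq un0 => a0; rewrite eu w0 a0 scale0r addr0.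
  have : 0 < a * a by rewrite lt0r mulf_neq0 // -expr2 sqr_ge0.
  nra.
have wpos : 0 < bform M w w.
  rewrite ltNge; apply/negP => wle; move/eqP: wn0; apply.
  exact: (lor_key HM (x := X)).
have : 0 <= a * a by rewrite -expr2 sqr_ge0.
nra.
Qed.

Lemma fwd : exists S, riemannian S /\ levi_civita S br prod.
Proof.
exists S; split; first by split; [exact: S_sym | exact: S_pos].
apply: lc_of_skew => //; first exact: S_sym.
move=> u v w; rewrite !bformS.
have h1 := skM u v w; have h2 := skM u v X; have h3 := skM u w X.
rewrite !parX !bform0r !addr0 in h2 h3.
by rewrite (bform_sym X (p u w)) // h2 h3 !mul0r !mulr0 !subr0.
Qed.
End Fwd.

Lemma S_ge0 (S : 'M[R]_n) (y : vec) : riemannian S -> 0 <= bform S y y.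
Proof.
case=> _ pS; have [->|yn0] := eqVneq y 0; first by rewrite bform0l.
exact: ltW (pS _ yn0).
Qed.

Lemma bwd : (exists S, riemannian S /\ levi_civita S br prod) ->
  exists X, timelike M X /\ killing M br X.
Proof.
case=> S [HS lcS]; have [sS pS] := HS.
have skS := lc_skew Hbr sS lcS.
have [c [e [cpos en0 he]]] := gen_eig HS HM.
have heM z : bform M e z = - c * bform S e z.
  by rewrite /bform he -scalemxAl mxE.
have hy u z : bform M (p u e) z = - c * bform S (p u e) z.
  have h1 : bform M (p u e) z = - bform M e (p u z) by have := skM u e z; lra.
  have h2 : bform S e (p u z) = - bform S (p u e) z by have := skS u e z; lra.
  by rewrite h1 heM h2 mulrN mulNr opprK.
have te : bform M e e < 0.
  rewrite heM; have := pS e en0; nra.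
have par u : p u e = 0.
  apply: (lor_key HM (x := e)) => //.
    have := skM u e e; rewrite (bform_sym e (p u e)) //; lra.
  rewrite hy; have := S_ge0 (p u e) HS; nra.
exists e; split => // u v.
by rewrite -!tor !par !subr0; exact: skM.
Qed.
End Main.

Theorem corollary1p3 (R : realType) (n : nat)
  (br : 'rV[R]_n -> 'rV[R]_n -> 'rV[R]_n) (M : 'M[R]_n)
  (prod : 'rV[R]_n -> 'rV[R]_n -> 'rV[R]_n) :
  lie_bracket br -> lorentzian M -> levi_civita M br prod ->
  flat_product br prod ->
  ((exists X : 'rV[R]_n, timelike M X /\ killing M br X) <->
   (exists S : 'M[R]_n, riemannian S /\ levi_civita S br prod)).
Proof.
move=> Hbr HM lcM fl; split.
  by case=> X [tX kX]; exact: (fwd Hbr HM lcM fl tX kX).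
exact: (bwd Hbr HM lcM).
Qed.
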